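(* (Extension Lemma.) Let $\Gamma$ be an abstract consistency class and $A\in\Gamma$. Then there exists an evident branch $E$ with $A\subseteq E$. Moreover, if $\Gamma$ is complete, there exists a complete evident branch $E$ with $A\subseteq E$.
   Context: Types: a countable set of base types including a distinguished $o$; other base types are sorts ($\alpha$). Types: base types and $\sigma\tau$ (functions from $\sigma$ to $\tau$; $\sigma\tau\mu=\sigma(\tau\mu)$). Countably many names, each with a unique type, infinitely many of each type. Terms: names; $st:\mu$ for $s:\tau\mu,t:\tau$; $\lambda x.t:\sigma\tau$ for a name $x:\sigma$, $t:\tau$. Logical constants: $\neg:oo$, $=_\sigma:\sigma\sigma o$; all other names are variables. Formulas: terms of type $o$; $s=_\sigma t$ is $(=_\sigma s)t$; $s\neq_\sigma t$ is $\neg(s=_\sigma t)$. A fixed type-preserving total normalization operator $[\cdot]$ on terms is given; $s$ is normal iff $[s]=s$; it satisfies $[[s]]=[s]$, $[[s]t]=[st]$, and $[xs_1\dots s_n]=x[s_1]\dots[s_n]$ for every name $x$ and $n\ge0$ with $xs_1\dots s_n$ of base type. A branch is a set of normal formulas. A branch $E$ is evident if ($x$ ranges over variables): (DN) $\neg\neg s\in E\Rightarrow s\in E$; (BQ) $s=_ot\in E\Rightarrow$ ($s,t\in E$ or $\neg s,\neg t\in E$); (BE) $s\neq_ot\in E\Rightarrow$ ($s,\neg t\in E$ or $\neg s,t\in E$); (FQ) $s=_{\sigma\tau}t\in E\Rightarrow[su]=[tu]\in E$ for every normal $u:\sigma$; (FE) $s\neq_{\sigma\tau}t\in E\Rightarrow[sx]\neq[tx]\in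 E$ for some variable $x$; (Mat) if $xs_1\dots s_n,\neg xt_1\dots t_n\in E$ then $n\ge1$ and $s_i\neq t_i\in E$ for some $i$; (Dec) if $xs_1\dots s_n\neq_\alpha xt_1\dots t_n\in E$ then $n\ge1$ and $s_i\neq t_i\in E$ for some $i$; (Con) if $s=_\alpha t,u\neq_\alpha v\in E$ then ($s\neq u,t\neq u\in E$) or ($s\neq v,t\neq v\in E$). $E$ is complete if for every normal formula $s$, $s\in E$ or $\neg s\in E$. An abstract consistency class is a set $\Gamma$ of branches such that every $A\in\Gamma$ satisfies: (DN) if $\neg\neg s\in A$ then $A\cup\{s\}\in\Gamma$; (BQ) if $s=_ot\in A$ then $A\cup\{s,t\}\in\Gamma$ or $A\cup\{\neg s,\neg t\}\in\Gamma$; (BE) if $s\neq_ot\in A$ then $A\cup\{s,\neg t\}\in\Gamma$ or $A\cup\{\neg s,t\}\in\Gamma$; (FQ) if $s=_{\sigma\tau}t\in A$ then $A\cup\{[su]=[tu]\}\in\Gamma$ for every normal $u:\sigma$; (FE) if $s\neq_{\sigma\tau}t\in A$ then $A\cup\{[sx]\neq[tx]\}\in\Gamma$ for some variable $x$; (Mat) if $xs_1\dots s_n\in A$ and $\neg xt_1\dots t_n\in A$ then $n\ge1$ and $A\cup\{s_i\neq t_i\}\in\Gamma$ for some $i$; (Dec) if $xs_1\dots s_n\neq_\alpha xt_1\dots t_n\in A$ then $n\ge1$ and $A\cup\{s_i\neq t_i\}\in\Gamma$ for some $i$; (Con) if $s=_\alpha t$ and $u\neq_\alpha v$ are in $A$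 then $A\cup\{s\neq u,t\neq u\}\in\Gamma$ or $A\cup\{s\neq v,t\neq v\}\in\Gamma$. $\Gamma$ is complete if for every $A\in\Gamma$ and every normal formula $s$, $A\cup\{s\}\in\Gamma$ or $A\cup\{\neg s\}\in\Gamma$. *)

(* Defs.v *)
From mathcomp Require Import all_boot.
Set Implicit Arguments. Unset Strict Implicit. Unset Printing Implicit Defensive.

Inductive ty (B : Type) : Type :=
| Base of B
| Arr of ty B & ty B.

Inductive term (B N : Type) : Type :=
| Var of N
| Neg
| Eq of ty B
| App of term B N & term B N
| Lam of N & term B N.

Arguments Neg {B N}.
Arguments Eq {B N}.

Section STT.
Variables (B : countType) (o : B) (N : countType) (nty : N -> ty B).

Local Notation ty := (ty B).
Local Notation term := (term B N).
Local Notation tO := (Base o).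

Inductive has_ty : term -> ty -> Prop :=
| ht_var x : has_ty (Var B x) (nty x)
| ht_neg : has_ty Neg (Arr tO tO)
| ht_eq s : has_ty (Eq s) (Arr s (Arr s tO))
| ht_app s t a b : has_ty s (Arr a b) -> has_ty t a -> has_ty (App s t) b
| ht_lam x t b : has_ty t b -> has_ty (Lam x t) (Arr (nty x) b).

Definition apps (h : term) (ss : seq term) : term := foldl (@App B N) h ss.

Definition is_name (h : term) : Prop :=
  (exists x, h = Var B x) \/ h = Neg \/ (exists s, h = Eq s).

Record normalizer (norm : term -> term) : Prop := {
  norm_ty : forall s sg, has_ty s sg -> has_ty (norm s) sg;
  norm_idem : forall s sg, has_ty s sg -> norm (norm s) = norm s;
  norm_app : forall s t tau, has_ty (App s t) tau ->
      norm (App (norm s) t) = norm (App s t);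
  norm_head : forall h ss b, is_name h -> has_ty (apps h ss) (Base b) ->
      norm (apps h ss) = apps h (map norm ss)
}.

Variable norm : term -> term.

Definition eqf (sg : ty) (s t : term) : term := App (App (Eq sg) s) t.
Definition neg (s : term) : term := App Neg s.
Definition neqf (sg : ty) (s t : term) : term := neg (eqf sg s t).

Definition is_sort (a : ty) : Prop := exists b, a = Base b /\ b <> o.
Definition normal (s : term) : Prop := norm s = s.
Definition nformula (s : term) : Prop := has_ty s tO /\ normal s.

Definition branch (A : term -> Prop) : Prop := forall s, A s -> nformula s.

Record evident (E : term -> Prop) : Prop := {
  ev_DN : forall s, E (neg (neg s)) -> E s;
  ev_BQ : forall s t, E (eqf tO s t) ->
      (E s /\ E t) \/ (E (neg s) /\ E (neg t));
  ev_BE : forall s t, E (neqf tO s t) ->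
      (E s /\ E (neg t)) \/ (E (neg s) /\ E t);
  ev_FQ : forall sg tau s t, E (eqf (Arr sg tau) s t) ->
      forall u, has_ty u sg -> normal u ->
      E (eqf tau (norm (App s u)) (norm (App t u)));
  ev_FE : forall sg tau s t, E (neqf (Arr sg tau) s t) ->
      exists x, nty x = sg /\
        E (neqf tau (norm (App s (Var B x))) (norm (App t (Var B x))));
  ev_Mat : forall x ss ts, size ss = size ts ->
      E (apps (Var B x) ss) -> E (neg (apps (Var B x) ts)) ->
      0 < size ss /\ exists i sg, i < size ss /\
        E (neqf sg (nth Neg ss i) (nth Neg ts i));
  ev_Dec : forall a x ss ts, is_sort a -> size ss = size ts ->
      E (neqf a (apps (Var B x) ss) (apps (Var B x) ts)) ->
      0 < size ss /\ exists i sg, i < size ss /\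
        E (neqf sg (nth Neg ss i) (nth Neg ts i));
  ev_Con : forall a s t u v, is_sort a -> E (eqf a s t) -> E (neqf a u v) ->
      (E (neqf a s u) /\ E (neqf a t u)) \/ (E (neqf a s v) /\ E (neqf a t v))
}.

Definition complete_branch (E : term -> Prop) : Prop :=
  forall s, nformula s -> E s \/ E (neg s).

Definition ext1 (A : term -> Prop) (s : term) : term -> Prop :=
  fun u => A u \/ u = s.
Definition ext2 (A : term -> Prop) (s t : term) : term -> Prop :=
  fun u => A u \/ u = s \/ u = t.

Record acc (G : (term -> Prop) -> Prop) : Prop := {
  acc_branch : forall A, G A -> branch A;
  acc_DN : forall A s, G A -> A (neg (neg s)) -> G (ext1 A s);
  acc_BQ : forall A s t, G A -> A (eqf tO s t) ->
      G (ext2 A s t) \/ G (ext2 A (neg s) (neg t));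
  acc_BE : forall A s t, G A -> A (neqf tO s t) ->
      G (ext2 A s (neg t)) \/ G (ext2 A (neg s) t);
  acc_FQ : forall A sg tau s t, G A -> A (eqf (Arr sg tau) s t) ->
      forall u, has_ty u sg -> normal u ->
      G (ext1 A (eqf tau (norm (App s u)) (norm (App t u))));
  acc_FE : forall A sg tau s t, G A -> A (neqf (Arr sg tau) s t) ->
      exists x, nty x = sg /\
        G (ext1 A (neqf tau (norm (App s (Var B x))) (norm (App t (Var B x)))));
  acc_Mat : forall A x ss ts, G A -> size ss = size ts ->
      A (apps (Var B x) ss) -> A (neg (apps (Var B x) ts)) ->
      0 < size ss /\ exists i sg, i < size ss /\
        G (ext1 A (neqf sg (nth Neg ss i) (nth Neg ts i)));
  acc_Dec : forall A a x ss ts, G A -> is_sort a -> size ss = size ts ->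
      A (neqf a (apps (Var B x) ss) (apps (Var B x) ts)) ->
      0 < size ss /\ exists i sg, i < size ss /\
        G (ext1 A (neqf sg (nth Neg ss i) (nth Neg ts i)));
  acc_Con : forall A a s t u v, G A -> is_sort a ->
      A (eqf a s t) -> A (neqf a u v) ->
      G (ext2 A (neqf a s u) (neqf a t u)) \/ G (ext2 A (neqf a s v) (neqf a t v))
}.

Definition complete_acc (G : (term -> Prop) -> Prop) : Prop :=
  forall A, G A -> forall s, nformula s -> G (ext1 A s) \/ G (ext1 A (neg s)).

End STT.

(* Main.v *)
From Stdlib Require Import Cantor ClassicalEpsilon Classical Lia.
Require Import Defs.
From mathcomp Require Import all_boot.

Set Implicit Arguments. Unset Strict Implicit.

Section Ext.
Variables (B : countType) (o : B) (N : countType) (nty : N -> ty B).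
Variable norm : term B N -> term B N.
Variable G : (term B N -> Prop) -> Prop.
Hypothesis HG : acc o nty norm G.

Local Notation ty := (ty B).
Local Notation term := (term B N).
Local Notation tO := (Base o).
Local Notation U := (GenTree.tree (B + N)%type).

Fixpoint encty (a : ty) : U := match a with
 | Base b => GenTree.Leaf (inl b)
 | Arr a b => GenTree.Node 0 [:: encty a; encty b] end.
Fixpoint dty (t : U) : ty := match t with
 | GenTree.Node 0 [:: a; b] => Arr (dty a) (dty b)
 | GenTree.Leaf (inl b) => Base b
 | _ => Base o end.
Lemma enctyK : cancel encty dty.
Proof. by elim=> //= a -> b ->. Qed.

Fixpoint enc (t : term) : U := match t with
 | Var x => GenTree.Leaf (inr x)
 | Neg => GenTree.Node 1 [::]
 | Eq a => GenTree.Node 2 [:: encty a]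
 | App s t => GenTree.Node 3 [:: enc s; enc t]
 | Lam x t => GenTree.Node 4 [:: GenTree.Leaf (inr x); enc t] end.
Fixpoint dtm (t : U) : term := match t with
 | GenTree.Leaf (inr x) => Var B x
 | GenTree.Node 2 [:: a] => Eq (dty a)
 | GenTree.Node 3 [:: a; b] => App (dtm a) (dtm b)
 | GenTree.Node 4 [:: GenTree.Leaf (inr x); b] => Lam x (dtm b)
 | _ => Neg end.
Lemma encK : cancel enc dtm.
Proof. by elim=> //= [a|s -> t ->|x t ->] //; rewrite enctyK. Qed.

Inductive ob :=
| ODN of term | OBQ of term & term | OBE of term & term
| OFQ of ty & ty & term & term & term
| OFE of ty & ty & term & term
| OMat of N & seq term & seq term
| ODec of ty & N & seq term & seq term
| OCon of ty & term & term & term & term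
| OCom of term.

Definition code := (nat * seq (seq U))%type.

Definition encob (b : ob) : code := match b with
| ODN s => (0, [:: [:: enc s]])
| OBQ s t => (1, [:: [:: enc s; enc t]])
| OBE s t => (2, [:: [:: enc s; enc t]])
| OFQ a b s t u => (3, [:: [:: encty a; encty b; enc s; enc t; enc u]])
| OFE a b s t => (4, [:: [:: encty a; encty b; enc s; enc t]])
| OMat x ss ts => (5, [:: [:: GenTree.Leaf (inr x)]; map enc ss; map enc ts])
| ODec a x ss ts => (6, [:: [:: encty a; GenTree.Leaf (inr x)]; map enc ss; map enc ts])
| OCon a s t u v => (7, [:: [:: encty a; enc s; enc t; enc u; enc v]])
| OCom s => (8, [:: [:: enc s]]) end.

Definition decob (c : code) : ob := match c with
| (0, [:: [:: s]]) => ODN (dtm s)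
| (1, [:: [:: s; t]]) => OBQ (dtm s) (dtm t)
| (2, [:: [:: s; t]]) => OBE (dtm s) (dtm t)
| (3, [:: [:: a; b; s; t; u]]) => OFQ (dty a) (dty b) (dtm s) (dtm t) (dtm u)
| (4, [:: [:: a; b; s; t]]) => OFE (dty a) (dty b) (dtm s) (dtm t)
| (5, [:: [:: GenTree.Leaf (inr x)]; ss; ts]) => OMat x (map dtm ss) (map dtm ts)
| (6, [:: [:: a; GenTree.Leaf (inr x)]; ss; ts]) => ODec (dty a) x (map dtm ss) (map dtm ts)
| (7, [:: [:: a; s; t; u; v]]) => OCon (dty a) (dtm s) (dtm t) (dtm u) (dtm v)
| (8, [:: [:: s]]) => OCom (dtm s)
| _ => ODN Neg end.

Lemma encobK : cancel encob decob.
Proof. by case=> /= *; rewrite ?enctyK ?encK ?(mapK encK). Qed.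

Definition eob (n : nat) : ob :=
  match (unpickle n : option code) with Some c => decob c | None => ODN Neg end.
Lemma eob_surj b : eob (pickle (encob b)) = b.
Proof. by rewrite /eob pickleK encobK. Qed.

Definition Trig (b : ob) (A : term -> Prop) : Prop := match b with
| ODN s => A (neg (neg s))
| OBQ s t => A (eqf tO s t)
| OBE s t => A (neqf tO s t)
| OFQ sg tau s t u => A (eqf (Arr sg tau) s t) /\ has_ty o nty u sg /\ normal norm u
| OFE sg tau s t => A (neqf (Arr sg tau) s t)
| OMat x ss ts => size ss = size ts /\ A (apps (Var B x) ss) /\ A (neg (apps (Var B x) ts))
| ODec a x ss ts => is_sort o a /\ size ss = size ts /\
     A (neqf a (apps (Var B x) ss) (apps (Var B x) ts))
| OCon a s t u v => is_sort o a /\ A (eqf a s t) /\ A (neqf a u v)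
| OCom s => complete_acc o nty norm G /\ nformula o nty norm s end.

Definition Goal (b : ob) (E : term -> Prop) : Prop := match b with
| ODN s => E s
| OBQ s t => (E s /\ E t) \/ (E (neg s) /\ E (neg t))
| OBE s t => (E s /\ E (neg t)) \/ (E (neg s) /\ E t)
| OFQ sg tau s t u => E (eqf tau (norm (App s u)) (norm (App t u)))
| OFE sg tau s t => exists x, nty x = sg /\
        E (neqf tau (norm (App s (Var B x))) (norm (App t (Var B x))))
| OMat x ss ts => 0 < size ss /\ exists i sg, i < size ss /\
        E (neqf sg (nth Neg ss i) (nth Neg ts i))
| ODec a x ss ts => 0 < size ss /\ exists i sg, i < size ss /\
        E (neqf sg (nth Neg ss i) (nth Neg ts i))
| OCon a s t u v => (E (neqf a s u) /\ E (neqf a t u)) \/ (E (neqf a s v) /\ E (neqf a t v))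
| OCom s => E s \/ E (neg s) end.

Definition sub (X Y : term -> Prop) := forall s, X s -> Y s.

Lemma Trig_mono b X Y : sub X Y -> Trig b X -> Trig b Y.
Proof.
move=> h; case: b => /=.
all: intros; repeat match goal with H : _ /\ _ |- _ => destruct H end.
all: try by split.
all: repeat split; try assumption; try (apply: h; assumption).
Qed.

Lemma Goal_mono b X Y : sub X Y -> Goal b X -> Goal b Y.
Proof.
move=> h; case: b => /=.
- by move=> ? /h.
- by move=> ? ? [[/h ? /h ?]|[/h ? /h ?]]; [left|right].
- by move=> ? ? [[/h ? /h ?]|[/h ? /h ?]]; [left|right].
- by move=> ? ? ? ? ? /h.
- by move=> ? ? ? ? [x [? /h ?]]; exists x.
- by move=> ? ? ? [? [i [sg [? /h ?]]]]; split => //; exists i, sg.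
- by move=> ? ? ? ? [? [i [sg [? /h ?]]]]; split => //; exists i, sg.
- by move=> ? ? ? ? ? [[/h ? /h ?]|[/h ? /h ?]]; [left|right].
- by move=> ? [/h ?|/h ?]; [left|right].
Qed.

Lemma sub_ext1 A s : sub A (ext1 A s).
Proof. by move=> u; left. Qed.
Lemma sub_ext2 A s t : sub A (ext2 A s t).
Proof. by move=> u; left. Qed.

Lemma step_ex b (A : term -> Prop) : G A ->
  exists A', G A' /\ sub A A' /\ (Trig b A -> Goal b A').
Proof.
move=> GA; case: (classic (Trig b A)) => hT; last first.
  by exists A; split => //; split => // u.
case: b hT => /=.
- move=> s h; exists (ext1 A s); split; first exact: (acc_DN HG GA h).
  by split; [exact: sub_ext1| right].
- move=> s t h; case: (acc_BQ HG GA h) => g.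
  + by exists (ext2 A s t); split=> //; split; [exact: sub_ext2|left; split; right; [left|right]].
  + by exists (ext2 A (neg s) (neg t)); split=> //; split; [exact: sub_ext2|right; split; right; [left|right]].
- move=> s t h; case: (acc_BE HG GA h) => g.
  + by exists (ext2 A s (neg t)); split=> //; split; [exact: sub_ext2|left; split; right; [left|right]].
  + by exists (ext2 A (neg s) t); split=> //; split; [exact: sub_ext2|right; split; right; [left|right]].
- move=> sg tau s t u [h [hu nu]].
  exists (ext1 A (eqf tau (norm (App s u)) (norm (App t u)))).
  split; first exact: (acc_FQ HG GA h hu nu).
  by split; [exact: sub_ext1|right].
- move=> sg tau s t h; case: (acc_FE HG GA h) => x [hx g].
  eexists; split; first exact: g.
  by split; [exact: sub_ext1| exists x; split => //; right].
- move=> x ss ts [hs [h1 h2]]; case: (acc_Mat HG GA hs h1 h2) => hp [i [sg [hi g]]].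
  eexists; split; first exact: g.
  by split; [exact: sub_ext1| split => //; exists i, sg; split => //; right].
- move=> a x ss ts [ha [hs h]]; case: (acc_Dec HG GA ha hs h) => hp [i [sg [hi g]]].
  eexists; split; first exact: g.
  by split; [exact: sub_ext1| split => //; exists i, sg; split => //; right].
- move=> a s t u v [ha [h1 h2]]; case: (acc_Con HG GA ha h1 h2) => g.
  + by eexists; split; first exact: g; split; [exact: sub_ext2|left; split; right; [left|right]].
  + by eexists; split; first exact: g; split; [exact: sub_ext2|right; split; right; [left|right]].
- move=> s [hc hs]; case: (hc A GA s hs) => g.
  + by eexists; split; first exact: g; split; [exact: sub_ext1|left; right].
  + by eexists; split; first exact: g; split; [exact: sub_ext1|right; right].
Qed.

Definition GS := {X : term -> Prop | G X}.

Lemma step_ex' b (A : GS) :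
  exists A' : GS, sub (proj1_sig A) (proj1_sig A') /\
     (Trig b (proj1_sig A) -> Goal b (proj1_sig A')).
Proof.
case: A => X GX /=; case: (step_ex b GX) => Y [GY [h1 h2]].
by exists (exist _ Y GY).
Qed.

Definition stepf b (A : GS) : GS :=
  proj1_sig (constructive_indefinite_description _ (step_ex' b A)).
Lemma stepf_spec b A : sub (proj1_sig A) (proj1_sig (stepf b A)) /\
     (Trig b (proj1_sig A) -> Goal b (proj1_sig (stepf b A))).
Proof. exact: (proj2_sig (constructive_indefinite_description _ (step_ex' b A))). Qed.

Variable A0 : term -> Prop.
Hypothesis HA0 : G A0.

Definition idx (n : nat) : nat := fst (of_nat n).

Fixpoint ch (n : nat) : GS := match n with
| 0 => exist _ A0 HA0
| S n => stepf (eob (idx n)) (ch n) end.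

Definition C n := proj1_sig (ch n).

Lemma ch_mono i j : i <= j -> sub (C i) (C j).
Proof.
move=> /subnKC <-; elim: (j - i) => [|k IH]; first by rewrite addn0.
by rewrite addnS => s /IH; apply: (proj1 (stepf_spec _ _)).
Qed.

Definition E s := exists n, C n s.

Lemma C_E n : sub (C n) E.
Proof. by move=> s h; exists n. Qed.

Lemma process b n : Trig b (C n) -> Goal b E.
Proof.
move=> hT; set k := pickle (encob b).
have hm : n <= to_nat (k, n).
  apply/leP; have := to_nat_non_decreasing k n; lia.
set m := to_nat (k, n).
have hT' : Trig b (C m) by apply: Trig_mono hT; exact: ch_mono.
have he : eob (idx m) = b by rewrite /idx /m cancel_of_to /= eob_surj.
apply: (Goal_mono (@C_E m.+1)).
rewrite /C /= he; exact: (proj2 (stepf_spec b (ch m)) hT').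
Qed.

Lemma E2 s t : E s -> E t -> exists n, C n s /\ C n t.
Proof.
move=> [i hi] [j hj]; exists (maxn i j); split.
- by apply: (ch_mono (leq_maxl i j)).
- by apply: (ch_mono (leq_maxr i j)).
Qed.

Lemma E_evident : evident o nty norm E.
Proof.
split.
- by move=> s [n h]; apply: (@process (ODN s) n).
- by move=> s t [n h]; apply: (@process (OBQ s t) n).
- by move=> s t [n h]; apply: (@process (OBE s t) n).
- by move=> sg tau s t [n h] u hu nu; apply: (@process (OFQ sg tau s t u) n).
- by move=> sg tau s t [n h]; apply: (@process (OFE sg tau s t) n).
- move=> x ss ts hs h1 h2; case: (E2 h1 h2) => n [g1 g2].
  by apply: (@process (OMat x ss ts) n).
- by move=> a x ss ts ha hs [n h]; apply: (@process (ODec a x ss ts) n).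
- move=> a s t u v ha h1 h2; case: (E2 h1 h2) => n [g1 g2].
  by apply: (@process (OCon a s t u v) n).
Qed.

Lemma E_branch : branch o nty norm E.
Proof. by move=> s [n h]; apply: (acc_branch HG (proj2_sig (ch n))). Qed.

Lemma E_complete : complete_acc o nty norm G -> complete_branch o nty norm E.
Proof. by move=> hc s hs; apply: (@process (OCom s) 0). Qed.

Lemma A0_E : sub A0 E.
Proof. by move=> s h; exists 0. Qed.

End Ext.

Theorem lemma8p2 (B : countType) (o : B) (N : countType) (nty : N -> ty B)
  (norm : term B N -> term B N)
  (Hnames : forall (sg : ty B) (l : seq N), exists x, nty x = sg /\ x \notin l)
  (Hnorm : normalizer o nty norm)
  (G : (term B N -> Prop) -> Prop) (HG : acc o nty norm G)
  (A : term B N -> Prop) (HA : G A) :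
  (exists E : term B N -> Prop,
      branch o nty norm E /\ evident o nty norm E /\ (forall s, A s -> E s)) /\
  (complete_acc o nty norm G ->
   exists E : term B N -> Prop,
      branch o nty norm E /\ evident o nty norm E /\
      complete_branch o nty norm E /\ (forall s, A s -> E s)).
Proof.
split.
- exists (E HG HA); split; first exact: E_branch.
  by split; [exact: E_evident| exact: A0_E].
- move=> hc; exists (E HG HA); split; first exact: E_branch.
  split; first exact: E_evident.
  by split; [exact: E_complete| exact: A0_E].
Qed.
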